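(* Let $A \in M_n(\mathbb{C})$. Then strong continuity of $f_A^{-1}$ fails at every point $z\in\partial F(A)$ that is an isolated, fully round, multiply generated boundary point.
   Context: For $A\in M_n(\mathbb{C})$, $f_A(x)=x^*Ax$ is defined on the unit sphere $\mathbb{C}S^n$ of $\mathbb{C}^n$ and $F(A)=f_A(\mathbb{C}S^n)$ is the numerical range. The multivalued inverse $f_A^{-1}$ is strongly continuous at $z\in F(A)$ if for every $x\in f_A^{-1}(z)$ and every neighborhood $V$ of $x$ in $\mathbb{C}S^n$, $f_A(V)$ contains a neighborhood of $z$ relative to $F(A)$. A point $z\in\partial F(A)$ is fully round if neither of its one-sided neighborhoods in $\partial F(A)$ is a line segment, for every sufficiently small size. A boundary point $z$ is multiply generated if $f_A^{-1}(z)$ is not contained in a one-dimensional subspace of $\mathbb{C}^n$; it is an isolated multiply generated boundary point if some neighborhood of $z$ contains no other multiply generated boundary points. *)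

(* Defs.v *)
From HB Require Import structures.
From mathcomp Require Import all_boot all_order all_algebra.
From mathcomp Require Import complex.
From mathcomp Require Import reals.
Set Implicit Arguments. Unset Strict Implicit. Unset Printing Implicit Defensive.
Import Order.TTheory GRing.Theory Num.Theory.
Local Open Scope ring_scope.
Local Open Scope complex_scope.

Section NumRange.
Variables (R : realType) (n : nat) (A : 'M[R[i]]_n).
Local Notation C := R[i].

Definition cadj (x : 'cV[C]_n) : 'rV[C]_n := \row_j conjc (x j 0).

Definition fA (x : 'cV[C]_n) : C := (cadj x *m A *m x) 0 0.

Definition vnorm2 (x : 'cV[C]_n) : C := \sum_i `|x i 0| ^+ 2.

Definition unit_sphere (x : 'cV[C]_n) : Prop := vnorm2 x = 1.

Definition numrange (z : C) : Prop := exists2 x, unit_sphere x & fA x = z.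

Definition nr_boundary (z : C) : Prop :=
  forall e : R, 0 < e ->
    (exists2 w, numrange w & `|w - z| < e%:C) /\
    (exists2 w, ~ numrange w & `|w - z| < e%:C).

Definition segment (z w : C) (u : C) : Prop :=
  exists2 t : R, 0 <= t <= 1 & u = (1 - t)%:C * z + t%:C * w.

(* z is fully round: no one-sided neighborhood of z in the boundary is a
   line segment (i.e. no nondegenerate segment [z,w] lies in the boundary),
   and the one-sided neighborhoods are not the degenerate segment {z}. *)
Definition fully_round (z : C) : Prop :=
  nr_boundary z /\
  (forall w, w != z -> ~ (forall u, segment z w u -> nr_boundary u)) /\
  (exists2 w, nr_boundary w & w != z).

Definition multiply_generated (z : C) : Prop :=
  ~ exists2 v : 'cV[C]_n, v != 0 &
      forall x, unit_sphere x -> fA x = z -> exists c : C, x = c *: v.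

Definition isolated_mg (z : C) : Prop :=
  nr_boundary z /\ multiply_generated z /\
  exists2 e : R, 0 < e & forall w, nr_boundary w -> w != z ->
      `|w - z| < e%:C -> ~ multiply_generated w.

(* strong continuity of the multivalued inverse f_A^{-1} at z:
   for every x in f_A^{-1}(z) and every neighborhood V of x in CS^n,
   f_A(V) contains a neighborhood of z relative to F(A). *)
Definition strongly_continuous_at (z : C) : Prop :=
  forall x, unit_sphere x -> fA x = z ->
  forall eps : R, 0 < eps -> exists2 delta : R, 0 < delta &
    forall w, numrange w -> `|w - z| < delta%:C ->
      exists2 y, unit_sphere y /\ vnorm2 (y - x) < eps%:C & fA y = w.

End NumRange.

(* Main.v *)
Require Import Defs.
From HB Require Import structures.
From mathcomp Require Import all_boot all_order all_algebra.
From mathcomp Require Import complex.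
From mathcomp Require Import reals.
From mathcomp Require Import classical_sets boolp functions topology normedtype derive.
From mathcomp Require Import ring lra.
Import Order.TTheory GRing.Theory Num.Theory.
Import numFieldTopology.Exports numFieldNormedType.Exports.
Local Open Scope ring_scope.
Set Implicit Arguments. Unset Strict Implicit.

Section Alg.
Variable R : realType.
Local Notation C := R[i].
Local Open Scope complex_scope.

Definition dc (u : C) : R := complex.Re u ^+ 2 + complex.Im u ^+ 2.

Lemma dc_ge0 u : 0 <= dc u.
Proof. by rewrite /dc addr_ge0 // sqr_ge0. Qed.

Lemma dcM a b : dc (a * b) = dc a * dc b.
Proof. by case: a => a1 a2; case: b => b1 b2; rewrite /dc /=; ring. Qed.

Lemma dcN a : dc (- a) = dc a.
Proof. by case: a => a1 a2; rewrite /dc /=; ring. Qed.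

Lemma dcD_le a b : dc (a + b) <= 2 * dc a + 2 * dc b.
Proof.
case: a => a1 a2; case: b => b1 b2; rewrite /dc /=.
rewrite -subr_ge0.
have -> : 2 * (a1 ^+ 2 + a2 ^+ 2) + 2 * (b1 ^+ 2 + b2 ^+ 2) -
   ((a1 + b1) ^+ 2 + (a2 + b2) ^+ 2) = (a1 - b1)^+2 + (a2 - b2)^+2 by ring.
by rewrite addr_ge0 // sqr_ge0.
Qed.

Lemma dc_eq0 a : dc a = 0 -> a = 0.
Proof.
case: a => a1 a2; rewrite /dc /= => /eqP; rewrite paddr_eq0 ?sqr_ge0 //.
by rewrite !sqrf_eq0 => /andP[/eqP-> /eqP->].
Qed.

Lemma dcR (t : R) : dc t%:C = t ^+ 2.
Proof. by rewrite /dc /=; ring. Qed.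

Lemma normC2 (u : C) : `|u| ^+ 2 = (dc u)%:C.
Proof. by rewrite -add_Re2_Im2. Qed.

Lemma normCsq (u : C) : `|u| ^+ 2 = u * u^*.
Proof. by rewrite normcE sqr_sqrtc. Qed.

Lemma normC_lt (u : C) (e : R) : 0 < e -> (`|u| < e%:C) = (dc u < e ^+ 2).
Proof.
move=> e0; rewrite normc_def ltcR /dc.
have -> : e = Num.sqrt (e ^+ 2) by rewrite sqrtr_sqr gtr0_norm.
rewrite ltr_sqrt ?exprn_gt0 //.
by rewrite sqrtr_sqr gtr0_norm.
Qed.

Lemma conjR (t : R) : Num.conj (t%:C) = t%:C.
Proof. exact: conjc_real. Qed.

End Alg.
Arguments dc {R}.

Section Vec.
Variables (R : realType) (n : nat) (A : 'M[R[i]]_n).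
Local Notation C := R[i].
Local Open Scope complex_scope.
Implicit Types x y : 'cV[C]_n.

Definition nr x : R := \sum_i dc (x i 0).

Lemma vnorm2E x : vnorm2 x = (nr x)%:C.
Proof. by rewrite /vnorm2 /nr rmorph_sum; apply: eq_bigr => i _; rewrite normC2. Qed.

Lemma nr_ge0 x : 0 <= nr x.
Proof. by apply: sumr_ge0 => i _; apply: dc_ge0. Qed.

Lemma nrD_le x y : nr (x + y) <= 2 * nr x + 2 * nr y.
Proof.
rewrite /nr !mulr_sumr -big_split /=; apply: ler_sum => i _.
by rewrite mxE dcD_le.
Qed.

Lemma nrN x : nr (- x) = nr x.
Proof. by apply: eq_bigr => i _; rewrite mxE dcN. Qed.

Lemma nrZ (c : C) x : nr (c *: x) = dc c * nr x.
Proof. by rewrite /nr mulr_sumr; apply: eq_bigr => i _; rewrite mxE dcM. Qed.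

Lemma nr_eq0 x : nr x = 0 -> x = 0.
Proof.
move=> /eqP; rewrite psumr_eq0 => [/allP H|i _]; last exact: dc_ge0.
apply/matrixP => i j; rewrite (ord1 j) mxE; apply: dc_eq0.
by apply/eqP; apply: H; rewrite mem_index_enum.
Qed.

Lemma unit_sphereE x : unit_sphere x <-> nr x = 1.
Proof.
rewrite /unit_sphere vnorm2E; split; first by case.
by move=> ->.
Qed.

Lemma cadjD x y : cadj (x + y) = cadj x + cadj y.
Proof. by apply/matrixP => i j; rewrite !mxE rmorphD. Qed.

Lemma cadjZ (c : C) x : cadj (c *: x) = c^* *: cadj x.
Proof. by apply/matrixP => i j; rewrite !mxE rmorphM. Qed.

Lemma cadjN x : cadj (- x) = - cadj x.
Proof. by apply/matrixP => i j; rewrite !mxE rmorphN. Qed.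

Definition ip x y : C := (cadj x *m y) 0 0.
Definition bf x y : C := (cadj x *m A *m y) 0 0.

Lemma fA_bf x : fA A x = bf x x. Proof. by []. Qed.

Lemma ipDl x y w : ip (x + y) w = ip x w + ip y w.
Proof. by rewrite /ip cadjD mulmxDl mxE. Qed.
Lemma ipDr x y w : ip w (x + y) = ip w x + ip w y.
Proof. by rewrite /ip mulmxDr mxE. Qed.
Lemma ipZl (c : C) x y : ip (c *: x) y = c^* * ip x y.
Proof. by rewrite /ip cadjZ -scalemxAl mxE. Qed.
Lemma ipZr (c : C) x y : ip x (c *: y) = c * ip x y.
Proof. by rewrite /ip -scalemxAr mxE. Qed.
Lemma ipNl x y : ip (- x) y = - ip x y.
Proof. by rewrite -scaleN1r ipZl rmorphN1 mulN1r. Qed.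
Lemma ipNr x y : ip x (- y) = - ip x y.
Proof. by rewrite -scaleN1r ipZr mulN1r. Qed.

Lemma bfDl x y w : bf (x + y) w = bf x w + bf y w.
Proof. by rewrite /bf cadjD !mulmxDl mxE. Qed.
Lemma bfDr x y w : bf w (x + y) = bf w x + bf w y.
Proof. by rewrite /bf mulmxDr mxE. Qed.
Lemma bfZl (c : C) x y : bf (c *: x) y = c^* * bf x y.
Proof. by rewrite /bf cadjZ -!scalemxAl mxE. Qed.
Lemma bfZr (c : C) x y : bf x (c *: y) = c * bf x y.
Proof. by rewrite /bf -scalemxAr mxE. Qed.

Lemma ip_sum x y : ip x y = \sum_j (x j 0)^* * y j 0.
Proof. by rewrite /ip mxE; apply: eq_bigr => j _; rewrite mxE. Qed.

Lemma vnorm2_ip x : vnorm2 x = ip x x.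
Proof. by rewrite ip_sum; apply: eq_bigr => j _; rewrite normCsq mulrC. Qed.

Lemma ipC x y : ip y x = (ip x y)^*.
Proof.
rewrite !ip_sum rmorph_sum; apply: eq_bigr => j _.
by rewrite rmorphM /= conjcK mulrC.
Qed.

Lemma fA_sum x : fA A x = \sum_j \sum_k (x j 0)^* * A j k * x k 0.
Proof.
rewrite /fA mxE exchange_big /=; apply: eq_bigr => k _.
by rewrite mxE mulr_suml; apply: eq_bigr => j _; rewrite mxE.
Qed.


Lemma ip11 x : nr x = 1 -> ip x x = 1.
Proof. by move=> h; rewrite -vnorm2_ip vnorm2E h. Qed.

Lemma sep x1 x2 : nr x1 = 1 -> (forall c : C, x2 != c *: x1) ->
  exists2 D : R, 0 < D & forall g : C, D <= nr (x2 - g *: x1).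
Proof.
move=> n1 nc.
pose mu := ip x1 x2; pose r := x2 - mu *: x1.
have r0 : r != 0 by rewrite subr_eq0.
exists (nr r).
  rewrite lt_neqAle nr_ge0 andbT eq_sym; apply/negP => /eqP h.
  by move/eqP: r0; apply; apply: nr_eq0.
move=> g.
have -> : x2 - g *: x1 = r + (mu - g) *: x1.
  by rewrite /r scalerBl addrA subrK.
have ip1 : ip x1 r = 0 by rewrite /r ipDr ipNr ipZr ip11 // mulr1 subrr.
have ip2 : ip r x1 = 0 by rewrite ipC ip1 rmorph0.
set c := mu - g.
clearbody r c.
have : vnorm2 (r + c *: x1) = vnorm2 r + (dc c)%:C.
  rewrite !vnorm2_ip ipDl !ipDr !ipZl !ipZr ip1 ip2 (ip11 n1).
  by rewrite -normC2 normCsq !mulr0 !addr0 add0r mulr1 mulrC.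
rewrite !vnorm2E -rmorphD => /complexI ->.
by rewrite lerDl dc_ge0.
Qed.

End Vec.

Section Top.
Variables (R : realType) (n : nat) (A : 'M[R[i]]_n).
Local Notation C := R[i].
Local Open Scope complex_scope.
Local Notation V := 'rV[R]_(n + n).

Definition cc (g : V -> C) :=
  continuous (fun X : V => complex.Re (g X)) /\ continuous (fun X : V => complex.Im (g X)).

Lemma cc_cst (c : C) : cc (fun _ => c).
Proof. by split; apply: cst_continuous. Qed.

Lemma cc_add g h : cc g -> cc h -> cc (fun X => g X + h X).
Proof.
move=> [g1 g2] [h1 h2]; split => X.
  have e : forall Y, complex.Re (g Y + h Y) = complex.Re (g Y) + complex.Re (h Y).
    by move=> Y; case: (g Y); case: (h Y).
  under eq_fun do rewrite e.
  exact: (continuousD (g1 X) (h1 X)).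
have e : forall Y, complex.Im (g Y + h Y) = complex.Im (g Y) + complex.Im (h Y).
  by move=> Y; case: (g Y); case: (h Y).
under eq_fun do rewrite e.
exact: (continuousD (g2 X) (h2 X)).
Qed.

Lemma cc_mul g h : cc g -> cc h -> cc (fun X => g X * h X).
Proof.
move=> [g1 g2] [h1 h2]; split => X.
  have e : forall Y, complex.Re (g Y * h Y) =
     complex.Re (g Y) * complex.Re (h Y) - complex.Im (g Y) * complex.Im (h Y).
    by move=> Y; case: (g Y); case: (h Y).
  under eq_fun do rewrite e.
  exact: (continuousB (continuousM (g1 X) (h1 X)) (continuousM (g2 X) (h2 X))).
have e : forall Y, complex.Im (g Y * h Y) =
   complex.Re (g Y) * complex.Im (h Y) + complex.Im (g Y) * complex.Re (h Y).
  by move=> Y; case: (g Y); case: (h Y).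
under eq_fun do rewrite e.
exact: (continuousD (continuousM (g1 X) (h2 X)) (continuousM (g2 X) (h1 X))).
Qed.

Lemma cc_conj g : cc g -> cc (fun X => (g X)^*).
Proof.
move=> [g1 g2]; split => X.
  have e : forall Y, complex.Re ((g Y)^*) = complex.Re (g Y).
    by move=> Y; case: (g Y).
  under eq_fun do rewrite e.
  exact: g1.
have e : forall Y, complex.Im ((g Y)^*) = - complex.Im (g Y).
  by move=> Y; case: (g Y).
under eq_fun do rewrite e.
exact: (continuousN (g2 X)).
Qed.

Lemma cc_sum (I : Type) (r : seq I) (P : pred I) (g : I -> V -> C) :
  (forall i, cc (g i)) -> cc (fun X => \sum_(i <- r | P i) g i X).
Proof.
move=> H; elim: r => [|a r IH].
  by under eq_fun do rewrite big_nil; apply: cc_cst.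
under eq_fun do rewrite big_cons.
case: (P a) => //; exact: cc_add.
Qed.

Lemma cc_coord (i j : 'I_(n + n)) : cc (fun X : V => X 0 i +i* X 0 j).
Proof. by split; apply: coord_continuous. Qed.

Definition phi (X : V) : 'cV[C]_n := \col_j (X 0 (lshift n j) +i* X 0 (rshift n j)).
Definition psi (x : 'cV[C]_n) : V :=
  row_mx (\row_j complex.Re (x j 0)) (\row_j complex.Im (x j 0)).

Lemma phiK x : phi (psi x) = x.
Proof.
apply/matrixP => i j; rewrite (ord1 j) mxE row_mxEl row_mxEr !mxE.
by case: (x i 0).
Qed.

Lemma nr_phi X : nr (phi X) = \sum_(k < n + n) X 0 k ^+ 2.
Proof.
rewrite /nr big_split_ord /= -big_split /=; apply: eq_bigr => j _.
by rewrite mxE /dc.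
Qed.

Lemma cc_fA : cc (fun X => fA A (phi X)).
Proof.
under eq_fun do rewrite fA_sum.
apply: cc_sum => j; apply: cc_sum => k.
apply: cc_mul; last by under eq_fun do rewrite mxE; apply: cc_coord.
apply: cc_mul; last exact: cc_cst.
by apply: cc_conj; under eq_fun do rewrite mxE; apply: cc_coord.
Qed.


Lemma rc_sum (I : Type) (r : seq I) (P : pred I) (g : I -> V -> R) :
  (forall i, continuous (g i)) -> continuous (fun X => \sum_(i <- r | P i) g i X).
Proof.
move=> H; elim: r => [|a r IH].
  by under eq_fun do rewrite big_nil; apply: cst_continuous.
under eq_fun do rewrite big_cons.
case: (P a) => // X; exact: (continuousD (H a X) (IH X)).
Qed.

Lemma sq_cont : continuous (fun X : V => \sum_(k < n + n) X 0 k ^+ 2).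
Proof.
apply: rc_sum => k X.
under eq_fun do rewrite expr2.
exact: (continuousM (@coord_continuous _ _ _ 0 k X) (@coord_continuous _ _ _ 0 k X)).
Qed.

Lemma nr_closed (v : C) :
  (forall e : R, 0 < e -> exists2 w, numrange A w & dc (w - v) < e) ->
  numrange A v.
Proof.
move=> H.
have [w0 [x0 ux0 _] _] := H 1 ltr01.
pose K := [set X : V | \sum_(k < n + n) X 0 k ^+ 2 = 1]%classic.
have Kc : compact K.
  apply: (@subclosed_compact _ K [set u : V | forall i, `[-1, 1]%classic (u ord0 i)]%classic).
  - apply: (@preimage_closed _ _ (fun X : V => \sum_(k < n + n) X 0 k ^+ 2) [set 1]%classic).
      by move=> X _; apply: sq_cont.
    exact: closed_eq.
  - exact: (@rV_compact R (n + n) (fun=> `[-1, 1]%classic) (fun=> @segment_compact R _ _)).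
  - move=> X /= KX i; rewrite /= in_itv /= -ler_norml -(@expr_le1 _ 2) // ?normr_ge0 //.
    rewrite real_normK ?num_real // -KX (bigD1 i) //= lerDl.
    by apply: sumr_ge0 => k _; apply: sqr_ge0.
pose Phi X := dc (fA A (phi X) - v).
have Phic : continuous Phi.
  have [g1 g2] : cc (fun X => fA A (phi X) + (- v)).
    by apply: cc_add; [apply: cc_fA | apply: cc_cst].
  move=> X; rewrite /Phi /dc.
  under eq_fun do rewrite !expr2.
  exact: (continuousD (continuousM (g1 X) (g1 X)) (continuousM (g2 X) (g2 X))).
have K0 : (K !=set0)%classic.
  by exists (psi x0); rewrite /K /= -nr_phi phiK; apply/unit_sphereE.
have [c cK cmin] := EVT_min_rV K0 Kc (continuous_subspaceT Phic).
move: cK; rewrite inE /K /= => cK.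
have Phi0 : Phi c <= 0.
  rewrite leNgt; apply/negP => h.
  have [w [x ux <-] lt] := H _ h.
  have : Phi c <= Phi (psi x).
    apply: cmin; rewrite inE /K /= -nr_phi phiK; exact/unit_sphereE.
  by rewrite /Phi phiK leNgt lt.
have {Phi0} : Phi c = 0 by apply/eqP; rewrite eq_le Phi0 dc_ge0.
move=> /dc_eq0 /eqP; rewrite subr_eq0 => /eqP <-.
by exists (phi c) => //; apply/unit_sphereE; rewrite nr_phi.
Qed.

End Top.

Section Main.
Variables (R : realType) (n : nat) (A : 'M[R[i]]_n).
Local Notation C := R[i].
Local Open Scope complex_scope.

Lemma bdE w : nr_boundary A w <-> forall e : R, 0 < e ->
  (exists2 u, numrange A u & dc (u - w) < e) /\
  (exists2 u, ~ numrange A u & dc (u - w) < e).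
Proof.
split.
  move=> H e e0; have s0 : 0 < Num.sqrt e by rewrite sqrtr_gt0.
  case: (H _ s0) => -[u1 h1 l1] -[u2 h2 l2].
  rewrite normC_lt // sqr_sqrtr ?ltW // in l1; rewrite normC_lt // sqr_sqrtr ?ltW // in l2.
  by split; [exists u1 | exists u2].
move=> H e e0; have e20 : 0 < e ^+ 2 by rewrite exprn_gt0.
have [[u1 h1 l1] [u2 h2 l2]] := H _ e20.
by split; [exists u1 | exists u2]; rewrite // normC_lt.
Qed.

Lemma bd_in w : nr_boundary A w -> numrange A w.
Proof.
move=> /bdE H; apply: nr_closed => e e0.
by have [] := H e e0.
Qed.

Lemma near_pt_t x1 x0 (z w0 : C) (t : R) :
  nr x1 = 1 -> fA A x1 = z -> nr x0 = 1 -> fA A x0 = w0 ->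
  0 < t -> t <= 1/2 ->
  let d := bf A x1 x0 + bf A x0 x1 - z * (ip x1 x0 + ip x0 x1) in
  d + t%:C * (w0 - z) != 0 ->
  exists p, [/\ numrange A p, p != z &
     dc (p - z) <= 8 * t * (2 * dc d + 2 * dc (w0 - z))].
Proof.
move=> n1 f1 n0 f0 t0 th d dnz.
pose u := x1 + t%:C *: x0.
pose nu := nr u.
have nuE : vnorm2 u = nu%:C by rewrite vnorm2E.
have nu_ge : 1/4 <= nu.
  have := nrD_le u (- (t%:C *: x0)).
  rewrite addrK nrN nrZ dcR n1 n0 mulr1 -/nu => h.
  have : t ^+ 2 <= 1/4 by rewrite expr2; nra.
  lra.
have nu0 : 0 < nu by apply: lt_le_trans nu_ge; lra.
have nun0 : nu != 0 by rewrite gt_eqF.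
pose s := (Num.sqrt nu)^-1.
have s2 : s ^+ 2 = nu^-1 by rewrite /s exprVn sqr_sqrtr // ltW.
pose y := s%:C *: u.
have ny : nr y = 1 by rewrite /y nrZ dcR s2 mulVf.
have fy : fA A y = fA A u * (nu^-1)%:C.
  by rewrite /y !fA_bf bfZl bfZr conjR mulrA -rmorphM -expr2 s2 mulrC.
have fu : fA A u - z * nu%:C = t%:C * (d + t%:C * (w0 - z)).
  rewrite -nuE vnorm2_ip fA_bf /u /d !bfDl !bfDr !bfZl !bfZr !ipDl !ipDr !ipZl !ipZr.
  rewrite conjR -!fA_bf f1 f0 !ip11 //.
  ring.
have pz : fA A y - z = t%:C * (d + t%:C * (w0 - z)) * (nu^-1)%:C.
  by rewrite fy -fu mulrBl -mulrA -rmorphM mulfV ?mulr1 //.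
exists (fA A y); split.
- by exists y => //; apply/unit_sphereE.
- rewrite -subr_eq0 pz; apply: mulf_neq0; first apply: mulf_neq0 => //.
    by rewrite eq_complex /= gt_eqF.
  by rewrite eq_complex /= eqxx andbT invr_eq0.
- rewrite pz !dcM !dcR.
  have hD : dc (d + t%:C * (w0 - z)) <= 2 * dc d + 2 * dc (w0 - z).
    apply: le_trans (dcD_le _ _) _; rewrite dcM dcR lerD2l ler_pM2l //.
    have : t ^+ 2 <= 1 by rewrite expr2; nra.
    by move=> h; rewrite -[leRHS]mul1r ler_wpM2r // dc_ge0.
  have hnu : nu^-1 ^+ 2 <= 16.
    have h4 : nu^-1 <= 4.
      rewrite invf_ple ?posrE //; last lra.
    have h0 : 0 <= nu^-1 by rewrite invr_ge0 ltW.
    by rewrite expr2; nra.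
  have ht : t ^+ 2 <= t / 2 by rewrite expr2; nra.
  have -> : 8 * t * (2 * dc d + 2 * dc (w0 - z)) =
            (t / 2) * (2 * dc d + 2 * dc (w0 - z)) * 16 by field.
  apply: ler_pM; [|by rewrite sqr_ge0| |by []].
    by apply: mulr_ge0; [rewrite sqr_ge0 | rewrite dc_ge0].
  by apply: ler_pM => //; [rewrite sqr_ge0 | rewrite dc_ge0].
Qed.


Lemma near_pt x1 x0 (z w0 : C) :
  nr x1 = 1 -> fA A x1 = z -> nr x0 = 1 -> fA A x0 = w0 -> w0 != z ->
  forall del : R, 0 < del -> exists p, [/\ numrange A p, p != z & dc (p - z) < del].
Proof.
move=> n1 f1 n0 f0 wz del del0.
pose d := bf A x1 x0 + bf A x0 x1 - z * (ip x1 x0 + ip x0 x1).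
pose M := 2 * dc d + 2 * dc (w0 - z).
have M0 : 0 <= M by rewrite /M addr_ge0 // mulr_ge0 // dc_ge0.
pose tau := Num.min (1/2) (del / (32 * (M + 1))).
have tau0 : 0 < tau by rewrite lt_min; apply/andP; split; [lra | apply: divr_gt0 => //; nra].
have tau1 : tau <= 1/2 by rewrite ge_min lexx.
have tau2 : tau * (32 * (M + 1)) <= del.
  have : tau <= del / (32 * (M + 1)) by rewrite ge_min lexx orbT.
  by rewrite ler_pdivlMr //; nra.
have key : forall t, 0 < t -> t <= tau -> d + t%:C * (w0 - z) != 0 ->
    exists p, [/\ numrange A p, p != z & dc (p - z) < del].
  move=> t t0 tt dz.
  have [p [h1 h2 h3]] := @near_pt_t x1 x0 z w0 t n1 f1 n0 f0 t0 (le_trans tt tau1) dz.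
  exists p; split => //; apply: le_lt_trans h3 _; rewrite -/d -/M.
  have : t * (32 * (M + 1)) <= del by apply: le_trans tau2; rewrite ler_pM2r //; nra.
  nra.
have [h|h] := eqVneq (d + tau%:C * (w0 - z)) 0; last by apply: key h.
apply: (key (tau / 2)); [lra | lra |].
apply/negP => /eqP h'.
have : (tau / 2)%:C * (w0 - z) = 0.
  have -> : (tau / 2)%:C * (w0 - z) = (d + tau%:C * (w0 - z)) - (d + (tau / 2)%:C * (w0 - z)).
    have -> : tau%:C = (tau / 2)%:C + (tau / 2)%:C by rewrite -rmorphD; congr (_%:C); field.
    ring.
  by rewrite h h' subrr.
move/eqP; rewrite mulf_eq0 subr_eq0 (negbTE wz) orbF eq_complex /= eqxx andbT.
by apply/negP; rewrite gt_eqF //; lra.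
Qed.


Definition arc (p q : C) (c s : R) : C := p + (q - p) * (s +i* (c * s * (1 - s))).

Lemma arc0 p q c : arc p q c 0 = p.
Proof.
case: p q => [p1 p2] [q1 q2]; apply/eqP; rewrite /arc eq_complex /=.
by apply/andP; split; apply/eqP; ring.
Qed.

Lemma arc1 p q c : arc p q c 1 = q.
Proof.
case: p q => [p1 p2] [q1 q2]; apply/eqP; rewrite /arc eq_complex /=.
by apply/andP; split; apply/eqP; ring.
Qed.

Lemma arc_diff p q c s s' : arc p q c s - arc p q c s' =
   (q - p) * ((s - s') +i* (c * (s - s') * (1 - s - s'))).
Proof.
case: p q => [p1 p2] [q1 q2]; apply/eqP; rewrite /arc eq_complex /=.
by apply/andP; split; apply/eqP; ring.
Qed.

Lemma arc_lip p q c : 0 <= c <= 1 -> forall e : R, 0 < e ->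
  exists2 eta : R, 0 < eta & forall s s', 0 <= s <= 1 -> 0 <= s' <= 1 ->
    `|s - s'| <= eta -> dc (arc p q c s - arc p q c s') < e.
Proof.
move=> /andP[c0 c1] e e0.
pose K := dc (q - p).
have K0 : 0 <= K := dc_ge0 _.
exists (Num.min 1 (e / (2 * K + 1))).
  by rewrite lt_min ltr01 /= divr_gt0 //; lra.
move=> s s' /andP[s0 s1] /andP[s'0 s'1] hss.
have he1 : Num.min 1 (e / (2 * K + 1)) <= 1 by rewrite ge_min lexx.
have he2 : Num.min 1 (e / (2 * K + 1)) * (2 * K + 1) <= e.
  by rewrite -ler_pdivlMr ?ge_min ?lexx ?orbT //; lra.
set eta := Num.min 1 (e / (2 * K + 1)) in he1 he2 hss.
have hs2 : (s - s') ^+ 2 <= eta.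
  have h0 : 0 <= `|s - s'| by [].
  rewrite -real_normK ?num_real // expr2.
  nra.
rewrite arc_diff.
rewrite dcM /dc /= -/K.
have hc : (c * (1 - s - s')) ^+ 2 <= 1.
  have : `|c * (1 - s - s')| <= 1.
    rewrite normrM (ger0_norm c0).
    have : `|1 - s - s'| <= 1 by rewrite ler_norml; apply/andP; split; lra.
    by move=> h; have := normr_ge0 (1 - s - s'); nra.
  by move=> h; rewrite -real_normK ?num_real //; have := normr_ge0 (c * (1 - s - s')); nra.
have -> : (s - s') ^+ 2 + (c * (s - s') * (1 - s - s')) ^+ 2 =
   (s - s') ^+ 2 * (1 + (c * (1 - s - s')) ^+ 2) by ring.
have h2 : (s - s') ^+ 2 * (1 + (c * (1 - s - s')) ^+ 2) <= 2 * eta.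
  have -> : 2 * eta = eta * 2 by rewrite mulrC.
  apply: ler_pM => //; first by rewrite sqr_ge0.
    by rewrite addr_ge0 // sqr_ge0.
  lra.
have : K * ((s - s') ^+ 2 * (1 + (c * (1 - s - s')) ^+ 2)) <= K * (2 * eta).
  by apply: ler_wpM2l.
have eta0 : 0 < eta by rewrite lt_min ltr01 /= divr_gt0 //; lra.
move=> h; apply: (le_lt_trans h); nra.
Qed.


Lemma dc0 : dc (0 : C) = 0.
Proof. by rewrite /dc /= expr0n /= addr0. Qed.

Lemma sup_bd p q c : 0 <= c <= 1 -> numrange A p -> ~ numrange A q ->
  exists s, [/\ 0 <= s <= 1, numrange A (arc p q c s) & nr_boundary A (arc p q c s)].
Proof.
move=> hc Fp Fq.
pose S := [set s : R | 0 <= s <= 1 /\ numrange A (arc p q c s)]%classic.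
have S0 : S 0 by split; [rewrite lexx ler01 | rewrite arc0].
have S00 : (S !=set0)%classic by exists 0.
have ub1 : ubound S 1 by move=> s [/andP[_ h] _].
have hS : has_sup S by split => //; exists 1.
pose sig := sup S.
have sig0 : 0 <= sig := sup_upper_bound hS S0.
have sig1 : sig <= 1 := ge_sup S00 ub1.
have inF : numrange A (arc p q c sig).
  apply: nr_closed => e e0.
  have [eta eta0 Heta] := arc_lip p q hc e0.
  have [s [/andP[s0 s1] Fs] lts] := sup_adherent eta0 hS.
  have ss : s <= sig := sup_upper_bound hS (conj (introT andP (conj s0 s1)) Fs).
  exists (arc p q c s) => //; apply: Heta; rewrite ?s0 ?s1 ?sig0 ?sig1 //.
  by rewrite ler_norml; apply/andP; split; rewrite -/sig in lts; lra.
have sig1' : sig < 1.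
  rewrite lt_neqAle sig1 andbT; apply/negP => /eqP e1.
  by apply: Fq; rewrite -(arc1 p q c) -e1.
exists sig; split; rewrite ?sig0 ?sig1 //.
apply/bdE => e e0; split.
  by exists (arc p q c sig); rewrite // subrr dc0.
have [eta eta0 Heta] := arc_lip p q hc e0.
pose s' := Num.min 1 (sig + eta).
have s'1 : s' <= 1 by rewrite ge_min lexx.
have s'g : sig < s' by rewrite lt_min sig1' /=; lra.
exists (arc p q c s').
  move=> Fs'; have : s' <= sig.
    apply: (sup_upper_bound hS); split => //.
    by rewrite s'1 andbT; lra.
  by rewrite leNgt s'g.
apply: Heta; rewrite ?sig0 ?sig1 ?s'1 //; first by rewrite andbT; lra.
have : s' <= sig + eta by rewrite ge_min lexx orbT.
by move=> h; rewrite ler_norml; apply/andP; split; lra.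
Qed.


Lemma bd_pt z : nr_boundary A z -> (exists2 w, nr_boundary A w & w != z) ->
  forall del : R, 0 < del ->
  exists w, [/\ numrange A w, nr_boundary A w, w != z & dc (w - z) < del].
Proof.
move=> bz [w0 bw0 wz] del del0.
have [x1 /unit_sphereE u1 f1] := bd_in bz.
have [x0 /unit_sphereE u0 f0] := bd_in bw0.
have d0 : 0 < del / 18 by apply: divr_gt0.
have [p [Fp pz dp]] := near_pt u1 f1 u0 f0 wz d0.
have [_ [q Fq dq]] := (proj1 (bdE z) bz) _ d0.
have qp : q - p != 0 by rewrite subr_eq0; apply/eqP => e; apply: Fq; rewrite e.
have qz : q != z by apply/eqP => e; apply: Fq; rewrite e; apply: bd_in.
have [c [hc arcz]] : exists c, 0 <= c <= 1 /\
    forall s, 0 <= s <= 1 -> arc p q c s != z.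
  case: (pselect (forall s, 0 <= s <= 1 -> arc p q 0 s != z)) => H.
    by exists 0; rewrite lexx ler01.
  exists 1; split; first by rewrite ler01 lexx.
  move: H => /existsNP [s0] /not_implyP [hs0 /negP]; rewrite negbK => /eqP e0.
  move=> s hs; apply/eqP => e1.
  have : arc p q 0 s0 = arc p q 1 s by rewrite e0 e1.
  rewrite /arc => /addrI /(mulfI qp) /eqP; rewrite eq_complex /= => /andP[_ /eqP].
  rewrite !mul0r mul1r => /esym /eqP; rewrite mulf_eq0 subr_eq0 => /orP[] /eqP es.
    by move: e1; rewrite es arc0 => e1; move: pz; rewrite e1 eqxx.
  by move: e1; rewrite -es arc1 => e1; move: qz; rewrite e1 eqxx.
have [s [hs Fs bs]] := sup_bd hc Fp Fq.
exists (arc p q c s); split => //; first exact: arcz.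
have -> : arc p q c s - z = (p - z) + (q - p) * (s +i* (c * s * (1 - s))).
  by rewrite /arc addrAC.
apply: le_lt_trans (dcD_le _ _) _.
rewrite dcM.
have hk : dc (s +i* (c * s * (1 - s))) <= 2.
  rewrite /dc /=; move: hs hc => /andP[s0 s1] /andP[c0 c1].
  have hs1 : 0 <= s * (1 - s) by apply: mulr_ge0; lra.
  have hs2 : s * (1 - s) <= 1 by nra.
  have h0 : 0 <= c * s * (1 - s) by rewrite -mulrA mulr_ge0.
  have h1 : c * s * (1 - s) <= 1 by rewrite -mulrA; nra.
  nra.
have hqp : dc (q - p) <= 2 * dc (q - z) + 2 * dc (p - z).
  have -> : q - p = (q - z) + - (p - z) by rewrite opprB addrA subrK.
  by rewrite -(dcN (p - z)); apply: dcD_le.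
have := dc_ge0 (q - p); have := dc_ge0 (s +i* (c * s * (1 - s))).
have := dc_ge0 (p - z); have := dc_ge0 (q - z).
nra.
Qed.

End Main.

Unset Implicit Arguments.

Theorem theorem2 (R : realType) (n : nat) (A : 'M[R[i]]_n) (z : R[i]) :
  nr_boundary A z -> isolated_mg A z -> fully_round A z ->
  ~ strongly_continuous_at A z.
Proof.
move=> bz [_ [mg [e0 e0pos iso]]] [_ [_ fr3]] SC.
have [x1 ux1 f1] := bd_in bz.
have n1 : nr x1 = 1 by apply/unit_sphereE.
have x10 : x1 != 0.
  by apply/eqP => h; move: n1; rewrite h /nr big1 => [|i _]; [move/eqP; rewrite eq_sym oner_eq0 | rewrite mxE dc0].
have [x2 [ux2 [f2 nc]]] : exists x2, [/\ unit_sphere x2, fA A x2 = z &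
    forall c : R[i], x2 != c *: x1].
  apply: contrapT => H; apply: mg; exists x1 => // x ux fx.
  apply: contrapT => H2; apply: H; exists x; split => // c; apply/eqP => e.
  by apply: H2; exists c.
have [D D0 HD] := sep n1 nc.
have eps0 : 0 < D / 4 by apply: divr_gt0.
have [d1 d10 S1] := SC x1 ux1 f1 _ eps0.
have [d2 d20 S2] := SC x2 ux2 f2 _ eps0.
pose del := Num.min (d1 ^+ 2) (Num.min (d2 ^+ 2) (e0 ^+ 2)).
have del0 : 0 < del by rewrite !lt_min !exprn_gt0.
have [w [Fw bw wz dw]] := bd_pt bz fr3 del0.
have l1 : `|w - z| < (d1%:C)%C.
  by rewrite normC_lt //; apply: lt_le_trans dw _; rewrite ge_min lexx.
have l2 : `|w - z| < (d2%:C)%C.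
  by rewrite normC_lt //; apply: lt_le_trans dw _; rewrite !ge_min lexx orbT.
have l3 : `|w - z| < (e0%:C)%C.
  by rewrite normC_lt //; apply: lt_le_trans dw _; rewrite !ge_min lexx !orbT.
have [v v0 Hv] : exists2 v : 'cV[R[i]]_n, v != 0 & forall x, unit_sphere x ->
    fA A x = w -> exists c : R[i], x = c *: v.
  by apply: contrapT; apply: iso.
have [y1 [uy1 ny1] fy1] := S1 w Fw l1.
have [y2 [uy2 ny2] fy2] := S2 w Fw l2.
rewrite vnorm2E ltcR in ny1; rewrite vnorm2E ltcR in ny2.
have [c1 e1] := Hv y1 uy1 fy1.
have [c2 e2] := Hv y2 uy2 fy2.
move/unit_sphereE: uy1; move/unit_sphereE: uy2.
rewrite e1 e2 !nrZ => h2 h1.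
have c10 : c1 != 0 by apply/eqP => c0; move: h1; rewrite c0 /dc /= expr0n /= addr0 mul0r => /eqP; rewrite eq_sym oner_eq0.
pose g := c2 / c1.
have gc : g * c1 = c2 by rewrite /g divfK.
have nv0 : nr v != 0 by apply/eqP => h; move: h1; rewrite h mulr0 => /eqP; rewrite eq_sym oner_eq0.
have dg : dc g = 1.
  have : dc g * dc c1 * nr v = dc c1 * nr v by rewrite -dcM gc h2 h1.
  move=> /(mulIf nv0); rewrite -[X in _ = X]mul1r => /mulIf; apply.
  by apply/eqP => h; move: h1; rewrite h mul0r => /eqP; rewrite eq_sym oner_eq0.
have y2E : y2 = g *: y1 by rewrite e1 e2 scalerA gc.
have : x2 - g *: x1 = - (y2 - x2) + g *: (y1 - x1).
  by rewrite y2E scalerBr opprB addrA subrK.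
move=> hx; have := HD g; rewrite hx.
have := nrD_le (- (y2 - x2)) (g *: (y1 - x1)).
rewrite nrN nrZ dg mul1r => hle hD.
have : D <= 2 * (D / 4) + 2 * (D / 4).
  apply: le_trans hD (le_trans hle _).
  by apply: lerD; apply: ler_wpM2l => //; apply: ltW.
lra.
Qed.
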